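(* Let $r,p,q\ge1$ and $n\ge0$, and suppose the variety $\mathcal V$ is $(3,2r)$-modular (i.e. has $2r+1$ Day terms) and has $n+2$ Gumm terms. Then $\mathcal V$ is $(z,w)$-modular, where $z=2^p2^q-1$ and $w=2r^q+(2^q2^{p+1}-2^{q+2}-2p+2)n$.
   Context: $\circ$ is relational composition, juxtaposition is intersection. For relations $X,Y$ and $m\ge1$, $X\circ_m Y$ denotes $X\circ Y\circ X\circ\cdots$ with $m$ factors. For $m\ge3$, a variety is $(m,k)$-modular if each of its algebras satisfies $\alpha(\beta\circ_m\alpha\gamma)\subseteq\alpha\beta\circ_k\alpha\gamma$ for all congruences $\alpha,\beta,\gamma$. A variety has $n+2$ Gumm terms if it has ternary terms $p,j_1,\dots,j_{n+1}$ satisfying: $x=j_i(x,y,x)$ for all $i$; $x=p(x,z,z)$; $p(x,x,z)=j_1(x,x,z)$; $j_i(x,z,z)=j_{i+1}(x,z,z)$ for odd $i\le n$; $j_i(x,x,z)=j_{i+1}(x,x,z)$ for even $i\le n$; $j_{n+1}(x,y,z)=z$. *)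

(* Defs.v *)
From mathcomp Require Import all_boot.
Set Implicit Arguments. Unset Strict Implicit. Unset Printing Implicit Defensive.

Section UA.
Variable ops : Type.
Variable arity : ops -> nat.

Inductive term : Type :=
| Var : nat -> term
| App : forall f : ops, ('I_(arity f) -> term) -> term.

Record algebra : Type := Algebra {
  carrier :> Type;
  interp : forall f : ops, ('I_(arity f) -> carrier) -> carrier
}.

Fixpoint eval (A : algebra) (v : nat -> A) (t : term) : A :=
  match t with
  | Var i => v i
  | App f args => @interp A f (fun i => eval v (args i))
  end.

(** A variety is given by a set E of identities (Birkhoff); its members are
    the models of E. *)
Definition in_variety (E : term -> term -> Prop) (A : algebra) : Prop :=
  forall s t, E s t -> forall v : nat -> A, eval v s = eval v t.

Definition eval3 (A : algebra) (t : term) (a b c : A) : A :=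
  eval (fun i => match i with 0 => a | 1 => b | _ => c end) t.

Definition V_sat3 (E : term -> term -> Prop) (s t : term) : Prop :=
  forall A : algebra, in_variety E A -> forall a b c : A, eval3 s a b c = eval3 t a b c.

Definition congruence (A : algebra) (R : A -> A -> Prop) : Prop :=
  (forall x, R x x) /\ (forall x y, R x y -> R y x) /\
  (forall x y z, R x y -> R y z -> R x z) /\
  (forall f (a b : 'I_(arity f) -> A), (forall i, R (a i) (b i)) ->
     R (@interp A f a) (@interp A f b)).
End UA.

Definition rcomp (T : Type) (X Y : T -> T -> Prop) : T -> T -> Prop :=
  fun a c => exists b, X a b /\ Y b c.
Definition rint (T : Type) (X Y : T -> T -> Prop) : T -> T -> Prop :=
  fun a b => X a b /\ Y a b.

(** compn X Y m = X o Y o X o ... with m factors (m >= 1; m = 0 gives equality). *)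
Fixpoint compn (T : Type) (X Y : T -> T -> Prop) (m : nat) : T -> T -> Prop :=
  match m with
  | 0 => fun a b => a = b
  | 1 => X
  | S m' => rcomp X (compn Y X m')
  end.

Definition mk_modular (ops : Type) (arity : ops -> nat) (E : term arity -> term arity -> Prop)
    (m k : nat) : Prop :=
  forall (A : algebra arity), in_variety E A ->
  forall alpha beta gamma : A -> A -> Prop,
    congruence alpha -> congruence beta -> congruence gamma ->
    forall a b, rint alpha (compn beta (rint alpha gamma) m) a b ->
                compn (rint alpha beta) (rint alpha gamma) k a b.

(** n+2 Gumm terms p, j_1, ..., j_{n+1} (j is indexed by 1..n+1; j 0 and
    j i for i > n+1 are irrelevant). All identities are required to hold in
    every algebra of the variety. *)
Definition has_gumm_terms (ops : Type) (arity : ops -> nat)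
    (E : term arity -> term arity -> Prop) (n : nat) : Prop :=
  exists (p : term arity) (j : nat -> term arity),
  forall A : algebra arity, in_variety E A ->
    (forall i, 1 <= i <= n.+1 -> forall x y : A, x = eval3 (j i) x y x) /\
    (forall x z : A, x = eval3 p x z z) /\
    (forall x z : A, eval3 p x x z = eval3 (j 1) x x z) /\
    (forall i, 1 <= i <= n -> odd i -> forall x z : A,
        eval3 (j i) x z z = eval3 (j i.+1) x z z) /\
    (forall i, 1 <= i <= n -> ~~ odd i -> forall x z : A,
        eval3 (j i) x x z = eval3 (j i.+1) x x z) /\
    (forall x y z : A, eval3 (j n.+1) x y z = z).

(* Main.v *)
Require Import Defs.
From mathcomp Require Import all_boot.
From mathcomp Require Import zify.
From Stdlib Require Import FunctionalExtensionality ProofIrrelevance ClassicalEpsilon.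
Set Implicit Arguments. Unset Strict Implicit. Unset Printing Implicit Defensive.

Section Rel.
Variable T : Type.
Implicit Types (X Y : T -> T -> Prop).

Lemma compnS X Y n a b : compn X Y n.+1 a b <-> exists c, X a c /\ compn Y X n c b.
Proof.
case: n => [|n] /=.
  by split=> [H|[c [H <-]]] //; exists b.
exact: iff_refl.
Qed.

Lemma compn_app X Y m k a b : compn X Y (m + k) a b <->
  exists c, compn X Y m a c /\ (if odd m then compn Y X k c b else compn X Y k c b).
Proof.
elim: m X Y a => [|m IH] X Y a.
  by rewrite add0n /=; split=> [H|[c [-> H]]] //; exists a.
rewrite addSn; split.
- move/compnS=> [c1 [H1 /IH [c [H2 H3]]]]; exists c; split.
    by apply/compnS; exists c1.
  by move: H3 => /=; case: (odd m).
- move=> [c [/compnS [c1 [H1 H2]] H3]]; apply/compnS; exists c1; split=> //.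
  apply/IH; exists c; split=> //; by move: H3 => /=; case: (odd m).
Qed.

Lemma compn_conv X Y m a b : (forall x y, X x y -> X y x) -> (forall x y, Y x y -> Y y x) ->
  compn X Y m a b -> if odd m then compn X Y m b a else compn Y X m b a.
Proof.
elim: m X Y a b => [|m IH] X Y a b sX sY; first by move=> /= ->.
move/compnS=> [c [H1 H2]]; move: (IH Y X c b sY sX H2) => H3.
have -> : odd m.+1 = ~~ odd m by [].
rewrite -addn1; case E: (odd m) H3 => H3; apply/compn_app; exists c; split=> //;
  rewrite E; exact: sX.
Qed.

Lemma compn_refl X Y m a : (forall x, X x x) -> (forall x, Y x x) -> compn X Y m a a.
Proof.
elim: m X Y => [|m IH] X Y rX rY //=.
by apply/compnS; exists a; split; [exact: rX| exact: IH].
Qed.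

Lemma compn_merge X Y j k a c b : (forall x y z, X x y -> X y z -> X x z) ->
  compn X Y j.*2.+1 a c -> compn X Y k.+1 c b -> compn X Y (j.*2 + k.+1) a b.
Proof.
move=> tX; rewrite -addn1 => /compn_app [c' [H1]]; rewrite odd_double /= => H2.
move/compnS=> [c'' [H3 H4]].
apply/compn_app; exists c'; split=> //; rewrite odd_double.
apply/compnS; exists c''; split=> //; exact: tX H2 H3.
Qed.

Lemma compn_absorb X Y j a c b : (forall x y z, Y x y -> Y y z -> Y x z) ->
  compn X Y j.+1.*2 a c -> Y c b -> compn X Y j.+1.*2 a b.
Proof.
move=> tY; have E : j.+1.*2 = j.*2.+1 + 1 by rewrite doubleS addn1.
have O : odd j.*2.+1 = true by rewrite /= odd_double.
rewrite E => /compn_app [c' [H1]]; rewrite O => H2 H3.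
apply/compn_app; exists c'; split=> //; rewrite O; exact: tY H2 H3.
Qed.

Lemma compn_cat X Y j k a c b :
  compn X Y j.*2 a c -> compn X Y k c b -> compn X Y (j.*2 + k) a b.
Proof.
move=> H1 H2; apply/compn_app; exists c; split=> //; by rewrite odd_double.
Qed.

Lemma compn_half1 X Y k a c :
  (forall x, X x x) -> (forall x, Y x x) ->
  (forall x y, X x y -> X y x) -> (forall x y, Y x y -> Y y x) -> odd k ->
  compn X Y (k.+1 + k) a c -> exists v, compn X Y k.+1 a v /\ compn X Y k.+1 c v.
Proof.
move=> rX rY sX sY ok; have O : odd k.+1 = false by rewrite /= ok.
move=> /compn_app [v [H1]]; rewrite O => H2.
exists v; split=> //.
move: (compn_conv sX sY H2); rewrite ok => H3.
rewrite -addn1; apply/compn_app; exists v; split=> //; rewrite ok; exact: rY.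
Qed.

Lemma compn_half2 X Y k u u' v :
  (forall x y, X x y -> X y x) -> (forall x y, Y x y -> Y y x) ->
  (forall x y z, Y x y -> Y y z -> Y x z) -> odd k ->
  compn X Y k.+1 u v -> compn X Y k.+1 u' v -> compn X Y (k.+1 + k) u u'.
Proof.
move=> sX sY tY ok H1 H2; have O : odd k.+1 = false by rewrite /= ok.
move: (compn_conv sX sY H2); rewrite O => /compnS [w [Hvw Hw]].
rewrite -addn1 in H1; case/compn_app: H1 => t [Ht]; rewrite ok => Htv.
apply/compn_app; exists w; split; last by rewrite O.
rewrite -addn1; apply/compn_app; exists t; split=> //; rewrite ok; exact: tY Htv Hvw.
Qed.

End Rel.

Lemma compn_map (U T : Type) (f : U -> T) (X Y : U -> U -> Prop) (X' Y' : T -> T -> Prop) m a b :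
  (forall x y, X x y -> X' (f x) (f y)) -> (forall x y, Y x y -> Y' (f x) (f y)) ->
  compn X Y m a b -> compn X' Y' m (f a) (f b).
Proof.
elim: m X Y X' Y' a => [|m IH] X Y X' Y' a HX HY; first by move=> /= ->.
move/compnS=> [c [H1 H2]]; apply/compnS; exists (f c); split; [exact: HX | exact: IH H2].
Qed.

Section Alg.
Variables (ops : Type) (arity : ops -> nat) (E : term arity -> term arity -> Prop).
Variable A : algebra arity.

Definition compat (R : A -> A -> Prop) := forall f (x y : 'I_(arity f) -> A),
  (forall i, R (x i) (y i)) -> R (@interp _ _ A f x) (@interp _ _ A f y).

Lemma eval_compat (R : A -> A -> Prop) t (v w : nat -> A) : compat R -> (forall i, R (v i) (w i)) ->
  R (eval v t) (eval w t).
Proof.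
move=> HR Hvw; elim: t => [i|f args IH] /=; [exact: Hvw | apply: HR => i; exact: IH].
Qed.

Lemma eval3_compat (R : A -> A -> Prop) t (a a' b b' c c' : A) : compat R -> R a a' -> R b b' -> R c c' ->
  R (eval3 t a b c) (eval3 t a' b' c').
Proof. by move=> HR Ha Hb Hc; apply: eval_compat => // -[|[|i]]. Qed.

Lemma compat_eq : compat (@eq A).
Proof. move=> f x y H; congr (@interp _ _ _ f _); exact: functional_extensionality. Qed.

Lemma compat_rcomp (R S : A -> A -> Prop) : compat R -> compat S -> compat (rcomp R S).
Proof.
move=> HR HS f x y H.
pose c i := proj1_sig (constructive_indefinite_description
   (fun b => R (x i) b /\ S b (y i)) (H i)).
have Hc i : R (x i) (c i) /\ S (c i) (y i) := proj2_sig (constructive_indefinite_description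
   (fun b => R (x i) b /\ S b (y i)) (H i)).
exists (@interp _ _ _ f c); split; [apply: HR | apply: HS] => i; by case: (Hc i).
Qed.

Lemma compat_compn (X Y : A -> A -> Prop) m : compat X -> compat Y -> compat (compn X Y m).
Proof.
elim: m X Y => [|m IH] X Y HX HY; first exact: compat_eq.
move=> f x y H; apply/compnS.
have H' : forall i, rcomp X (compn Y X m) (x i) (y i) by move=> i; apply/compnS; exact: H.
exact: (compat_rcomp HX (IH Y X HY HX) H').
Qed.

Lemma cong_refl (R : A -> A -> Prop) : congruence R -> forall x, R x x. Proof. by case. Qed.
Lemma cong_sym (R : A -> A -> Prop) : congruence R -> forall x y, R x y -> R y x. Proof. by case=> _ []. Qed.
Lemma cong_trans (R : A -> A -> Prop) : congruence R -> forall x y z, R x y -> R y z -> R x z.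
Proof. by case=> _ [_ []]. Qed.
Lemma cong_compat (R : A -> A -> Prop) : congruence R -> compat R. Proof. by case=> _ [_ [_]]. Qed.
Lemma rint_cong (R S : A -> A -> Prop) : congruence R -> congruence S -> congruence (rint R S).
Proof.
move=> HR HS; split; [|split; [|split]].
- move=> x; split; [exact: (cong_refl HR) | exact: (cong_refl HS)].
- move=> x y [H1 H2]; split; [exact: (cong_sym HR) | exact: (cong_sym HS)].
- move=> x y z [H1 H2] [H3 H4]; split; [exact: (cong_trans HR H1 H3) | exact: (cong_trans HS H2 H4)].
- move=> f x y H; split; [apply: (cong_compat HR) | apply: (cong_compat HS)] => i; by case: (H i).
Qed.

Section B.
Variable Y : A -> A -> Prop.
Hypothesis HY : compat Y.
Definition Bc := {uv : A * A | Y uv.1 uv.2}.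
Definition Bint f (x : 'I_(arity f) -> Bc) : Bc :=
  exist _ (@interp _ _ A f (fun i => (sval (x i)).1), @interp _ _ A f (fun i => (sval (x i)).2))
   (@HY f (fun i => (sval (x i)).1) (fun i => (sval (x i)).2) (fun i => proj2_sig (x i))).
Definition Balg := @Algebra ops arity Bc Bint.

Lemma Bc_inj (x y : Bc) : sval x = sval y -> x = y.
Proof. case: x => x hx; case: y => y hy /= exy; subst; f_equal; exact: proof_irrelevance. Qed.

Lemma evalB (v : nat -> Balg) t : sval (@eval _ _ Balg v t) =
  (eval (fun i => (sval (v i)).1) t, eval (fun i => (sval (v i)).2) t).
Proof.
elim: t => [i|f args IH] /=; first by case: (sval (v i)).
congr (_, _); congr (@interp _ _ _ f _); apply: functional_extensionality => i; by rewrite IH.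
Qed.

Lemma Bvar : in_variety E A -> in_variety E Balg.
Proof. move=> HA s t Est v; apply: Bc_inj; rewrite !evalB; congr (_, _); exact: HA. Qed.

Lemma pull_cong (R : A -> A -> Prop) : congruence R -> @congruence _ _ Balg (fun P Q : Bc => R (sval P).1 (sval Q).1).
Proof.
move=> HR; split; [|split; [|split]].
- move=> x; exact: (cong_refl HR).
- move=> x y; exact: (cong_sym HR).
- move=> x y z; exact: (cong_trans HR).
- move=> f x y H /=; apply: (cong_compat HR) => i; exact: H.
Qed.

Lemma ker2_cong : @congruence _ _ Balg (fun P Q : Bc => (sval P).2 = (sval Q).2).
Proof.
split; [|split; [|split]].
- by [].
- by move=> x y ->.
- by move=> x y z -> ->.
- move=> f x y H /=; apply: compat_eq => i; exact: H.
Qed.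
End B.

Section Main.
Variables alpha beta gamma : A -> A -> Prop.
Hypotheses (Ha : congruence alpha) (Hb : congruence beta) (Hg : congruence gamma).
Let ag := rint alpha gamma.
Let ab := rint alpha beta.
Let Hag : congruence ag := rint_cong Ha Hg.
Let Hab : congruence ab := rint_cong Ha Hb.

Definition Sz z W := forall a b, alpha a b -> compn beta ag z a b -> compn ab ag W a b.

Lemma blocks (X' : A -> A -> Prop) r W a b :
  (forall x y, X' x y -> compn ab ag W.+1.*2 x y) ->
  compn X' ag (2 * r) a b -> compn ab ag (r * W.+1.*2) a b.
Proof.
move=> HX; elim: r a => [|r IH] a; first by rewrite muln0 mul0n => /= ->.
have -> : 2 * r.+1 = (2 * r).+2 by rewrite mulnS.
move/compnS=> [c [Hac /compnS [d [Hcd Hdb]]]].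
rewrite mulSn; apply: compn_cat (IH _ Hdb).
apply: compn_absorb (HX _ _ Hac) Hcd; exact: (cong_trans Hag).
Qed.

Lemma split2 z a b : odd z -> compn beta ag z.*2.+1 a b ->
  exists c d, compn beta ag z a c /\ ag c d /\ compn beta ag z d b.
Proof.
move=> oz; have -> : z.*2.+1 = z + z.+1 by rewrite -addnn addnS.
move/compn_app=> [c [Hac]]; rewrite oz => /compnS [d [Hcd Hdb]].
by exists c, d.
Qed.

Lemma day_step r k W : mk_modular E 3 (2 * r) -> in_variety E A -> odd k ->
  Sz (k.+1 + k) W.+1.*2 -> Sz (k.+1 + k).*2.+1 (r * W.+1.*2).
Proof.
move=> HD HA ok HS a b Hab0.
have oz : odd (k.+1 + k) by rewrite oddD /= ok.
move/(split2 oz)=> [c [d [Hac [Hcd Hdb]]]].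
have rb := cong_refl Hb; have rg := cong_refl Hag.
have sb := cong_sym Hb; have sg := cong_sym Hag.
have [v [Hav Hcv]] := compn_half1 rb rg sb sg ok Hac.
have [v' [Hdv Hbv]] := compn_half1 rb rg sb sg ok Hdb.
have HY : compat (compn beta ag k.+1) := compat_compn (m:=k.+1) (cong_compat Hb) (cong_compat Hag).
pose P : Bc (compn beta ag k.+1) := exist _ (a, v) Hav.
pose Q : Bc (compn beta ag k.+1) := exist _ (c, v) Hcv.
pose R : Bc (compn beta ag k.+1) := exist _ (d, v') Hdv.
pose S : Bc (compn beta ag k.+1) := exist _ (b, v') Hbv.
have := HD (Balg HY) (Bvar (HY:=HY) HA) _ _ _ (pull_cong HY Ha) (ker2_cong HY) (pull_cong HY Hg) P S.
move=> /(_ _) H.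
have H' : compn (rint (fun P Q : Bc _ => alpha (sval P).1 (sval Q).1)
                           (fun P Q : Bc _ => (sval P).2 = (sval Q).2))
                   (rint (fun P Q : Bc _ => alpha (sval P).1 (sval Q).1)
                         (fun P Q : Bc _ => gamma (sval P).1 (sval Q).1)) (2 * r) P S.
  apply: H; split; first exact: Hab0.
  exists Q; split; first by [].
  exists R; split; last by [].
  split; case: Hcd => //= H1 H2; exact: (cong_trans Ha (cong_trans Ha (cong_sym Ha _) Hab0)).
have sg' : forall x y, ag x y -> ag y x := sg.
have H2 : compn (rint alpha (compn beta ag (k.+1 + k))) ag (2 * r) a b.
  apply: (compn_map (f := fun P : Bc (compn beta ag k.+1) => (sval P).1) _ _ H').
  - move=> x y [H1 H2]; split=> //.
    apply: (compn_half2 sb sg (cong_trans Hag) ok (proj2_sig x)).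
    rewrite H2; exact: (proj2_sig y).
  - move=> x y [H1 H2]; by split.
apply: blocks H2 => x y [H1 H2]; exact: HS.
Qed.

Lemma gumm_step n z W : has_gumm_terms E n -> in_variety E A -> odd z ->
  Sz z W.+1.*2 -> Sz z.*2.+1 ((n * z).*2 + W.+1.*2).
Proof.
move=> [p [j Hgt]] HA oz HS a b Hab0 HL.
have [Hj1 [Hp2 [Hp3 [Hodd [Hev Hlast]]]]] := Hgt A HA.
have rb := cong_refl Hb; have rg := cong_refl Hag; have ra := cong_refl Ha.
have sb := cong_sym Hb; have sg := cong_sym Hag; have sa := cong_sym Ha.
have ta := cong_trans Ha; have tab := cong_trans Hab; have tg := cong_trans Hag.
have oz2 : odd z.*2.+1 by rewrite /= odd_double.
have HLba : compn beta ag z.*2.+1 b a by move: (compn_conv sb sg HL); rewrite oz2.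
have raw : forall i m x y, 1 <= i <= n.+1 -> compn beta ag m x y ->
    compn ab ag m (eval3 (j i) b x a) (eval3 (j i) b y a).
  move=> i m x y Hi; apply: (compn_map (f := fun x => eval3 (j i) b x a)).
  - move=> u w Huw; split.
      have Hu : alpha (eval3 (j i) b u a) b.
        rewrite {2}(Hj1 i Hi b u); exact: eval3_compat (cong_compat Ha) (ra _) (ra _) Hab0.
      have Hw : alpha (eval3 (j i) b w a) b.
        rewrite {2}(Hj1 i Hi b w); exact: eval3_compat (cong_compat Ha) (ra _) (ra _) Hab0.
      exact: ta Hu (sa _ _ Hw).
    exact: eval3_compat (cong_compat Hb) (rb _) Huw (rb _).
  - move=> u w Huw; exact: eval3_compat (cong_compat Hag) (rg _) Huw (rg _).
have tail : forall k, k <= n -> compn ab ag (k * z).*2.+1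
    (eval3 (j (n.+1 - k)) b (if odd (n.+1 - k) then b else a) a) a.
  elim=> [|k IH] Hk.
    by rewrite subn0 Hlast mul0n /=; split; [exact: ra | exact: rb].
  have Hi : 1 <= n.+1 - k.+1 <= n by apply/andP; split; lia.
  have Hi1 : n.+1 - k = (n.+1 - k.+1).+1 by lia.
  have Hi' : 1 <= n.+1 - k.+1 <= n.+1 by case/andP: Hi => H1 H2; apply/andP; split; lia.
  move: (IH (ltnW Hk)); rewrite Hi1 => IH'.
  have -> : (k.+1 * z).*2.+1 = z.*2 + ((k * z).*2).+1 by rewrite mulSn doubleD addnS.
  set i := n.+1 - k.+1 in Hi Hi' IH' *.
  apply: compn_merge tab _ IH'.
  case oi: (odd i).
  - have -> : odd i.+1 = false by rewrite /= oi.
    rewrite -(Hodd i Hi oi b a); exact: raw Hi' HLba.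
  - have -> : odd i.+1 = true by rewrite /= oi.
    rewrite -(Hev i Hi (negbT oi) b a); exact: raw Hi' HL.
move: (tail n (leqnn n)); rewrite subSnn; have -> : (if odd 1 then b else a) = b by []. rewrite -Hp3 => Htail.
move/(split2 oz): HL => [c [d [Hac [Hcd Hdb]]]].
pose e := eval3 p b d c; pose g := eval3 p b b a.
have Heb : ag e b.
  rewrite {1}(Hp2 b d); exact: eval3_compat (cong_compat Hag) (rg _) (rg _) Hcd.
have Hgb : alpha g b.
  rewrite {1}(Hp2 b b); exact: eval3_compat (cong_compat Ha) (ra _) (ra _) Hab0.
have HLz : compat (compn beta ag z) := compat_compn (cong_compat Hb) (cong_compat Hag).
have Hbd : compn beta ag z b d by move: (compn_conv sb sg Hdb); rewrite oz.
have Hge : compn beta ag z g e.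
  exact: eval3_compat HLz (compn_refl z b rb rg) Hbd Hac.
have Hge' : alpha g e by apply: ta Hgb (sa _ _ (proj1 Heb)).
move: (HS g e Hge' Hge) => H1.
have H0 : compn ab ag (n * z).*2.+1 a g.
  move: (compn_conv (cong_sym Hab) sg Htail); by rewrite /= odd_double.
move: (compn_merge tab H0 H1) => H2.
have E1 : (n * z).*2 + W.+1.*2 = (n * z + W).+1.*2 by rewrite -!muln2; lia.
rewrite E1; apply: (@compn_absorb _ ab ag (n * z + W) a e b tg _ Heb).
by rewrite -E1.
Qed.
End Main.
End Alg.

Fixpoint G (q p : nat) : nat :=
  match p with 0 => 0 | p'.+1 => G q p' + (2 ^ p'.+1 * 2 ^ q - 1) end.

Lemma G_closed q p : 0 < q -> 2 * G q p = (2 ^ q * 2 ^ p.+2 + 2) - 2 ^ q.+2 - 2 * p.+1.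
Proof.
move=> hq; have hx : 2 <= 2 ^ q by rewrite -{1}(expn1 2) leq_exp2l.
elim: p => [|p IH].
  rewrite /= !expnS expn0; lia.
have hy : p < 2 ^ p by rewrite ltn_expl.
rewrite /= mulnDr IH.
rewrite !expnS in IH *.
set x := 2 ^ q in hx IH *; set y := 2 ^ p in hy IH *.
have hm : 2 * (x * y) >= 2 * x + p by nia.
have -> : x * (2 * (2 * (2 * y))) = 8 * (x * y) by nia.
have -> : x * (2 * (2 * y)) = 4 * (x * y) by nia.
have -> : 2 * y * x = 2 * (x * y) by nia.
set m := x * y in hm *.
lia.
Qed.

Theorem theorem5p1 (ops : Type) (arity : ops -> nat)
    (E : term arity -> term arity -> Prop) (r p q n : nat) :
  1 <= r -> 1 <= p -> 1 <= q ->
  mk_modular E 3 (2 * r) ->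
  has_gumm_terms E n ->
  mk_modular E (2 ^ p * 2 ^ q - 1)
    (2 * r ^ q + ((2 ^ q * 2 ^ p.+1 + 2) - 2 ^ q.+2 - 2 * p) * n).
Proof.
move=> hr hp hq HD HG A HA alpha beta gamma Ha Hb Hg a b [Hab Hch].
have day_all : forall j, Sz alpha beta gamma (2 ^ j.+2 - 1) (2 * r ^ j.+1).
  elim=> [|j IH].
    rewrite expn1 => x y Hxy H; exact: (HD A HA alpha beta gamma Ha Hb Hg x y (conj Hxy H)).
  have hy : 0 < 2 ^ j by rewrite expn_gt0.
  set k := (2 ^ j - 1).*2.+1.
  have ok : odd k by rewrite /k /= odd_double.
  have hw : 0 < r ^ j.+1 by rewrite expn_gt0 hr.
  have E1 : 2 ^ j.+2 - 1 = k.+1 + k by rewrite /k !expnS -!muln2; lia.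
  have E2 : 2 * r ^ j.+1 = (r ^ j.+1 - 1).+1.*2 by rewrite -muln2; lia.
  rewrite E1 E2 in IH.
  have E3 : 2 ^ j.+3 - 1 = (k.+1 + k).*2.+1 by rewrite /k !expnS -!muln2; lia.
  have E4 : 2 * r ^ j.+2 = r * (r ^ j.+1 - 1).+1.*2.
    rewrite (expnS r j.+1) -muln2 (_ : (r ^ j.+1 - 1).+1 = r ^ j.+1); [nia | lia].
  rewrite E3 E4. exact: (day_step Ha Hb Hg HD HA ok IH).
case: q hq day_all Hch => // q _ day_all Hch.
have gumm_all : forall p', Sz alpha beta gamma (2 ^ p'.+1 * 2 ^ q.+1 - 1)
                                 (2 * (r ^ q.+1 + G q.+1 p' * n)).
  elim=> [|p' IH].
    rewrite expn1 -expnS /= mul0n addn0; exact: day_all q.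
  have hR : 0 < r ^ q.+1 by rewrite expn_gt0 hr.
  set t := 2 ^ p' * 2 ^ q.+1.
  have ht : 0 < t by rewrite muln_gt0 !expn_gt0.
  have Ez : 2 ^ p'.+1 * 2 ^ q.+1 - 1 = (t - 1).*2.+1 by rewrite expnS -mulnA -/t -muln2; lia.
  have oz : odd (t - 1).*2.+1 by rewrite /= odd_double.
  rewrite Ez in IH.
  have EW : 2 * (r ^ q.+1 + G q.+1 p' * n) = (r ^ q.+1 + G q.+1 p' * n - 1).+1.*2.
    rewrite -muln2; lia.
  rewrite EW in IH.
  have := gumm_step Ha Hb Hg HG HA oz IH.
  have -> : ((t - 1).*2.+1).*2.+1 = 2 ^ p'.+2 * 2 ^ q.+1 - 1.
    rewrite (expnS 2 p'.+1) -mulnA (expnS 2 p') -mulnA -/t -!muln2; lia.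
  rewrite /= Ez.
  set z := (t - 1).*2.+1.
  have -> : (n * z).*2 + (r ^ q.+1 + G q.+1 p' * n - 1).+1.*2 =
            2 * (r ^ q.+1 + (G q.+1 p' + z) * n).
    rewrite mulnDl (mulnC z n) -!muln2; lia.
  by [].
move=> {day_all}.
case: p hp Hch => // p _ Hch.
move: (G_closed p (ltn0Sn q)) => EG.
move: Hch; rewrite -EG.
have -> : 2 * r ^ q.+1 + 2 * G q.+1 p * n = 2 * (r ^ q.+1 + G q.+1 p * n) by rewrite mulnDr mulnA.
exact: gumm_all p a b Hab.
Qed.
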